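(* Let $K$ and $K'$ be two non-degenerate CMIs, with $\mathrm{can}(\mathrm{pur}(K))=(C,\langle\mathbb I_K,\mathbb I_K,P_i,1\le i\le t\rangle)$ and $\mathrm{can}(\mathrm{pur}(K'))=(C',\langle\mathbb I_{K'},\mathbb I_{K'},P'_j,1\le j\le s\rangle)$. If $K$ implies $K'$, then $C\subseteq C'$.
   Context: Setting: $X_1,\dots,X_n$ jointly distributed discrete random variables with $H(X_i)<\infty$; distribution unspecified. $X_\alpha=(X_i,i\in\alpha)$, $X_\emptyset$ constant. A CMI is $K=(C,\langle Q_1,\dots,Q_k\rangle)$, $k\ge0$, $C\subseteq\{1,\dots,n\}$, $\langle\cdot\rangle$ an unordered multiset of subsets; valid (for a given distribution) if $\sum_iH(X_{Q_i}|X_C)-H(X_{Q_1},\dots,X_{Q_k}|X_C)=0$. Empty members may be deleted. Degenerate = valid for every distribution, written $(\cdot,\langle\ \rangle)$. ''$K$ implies $K'$'': for every joint distribution, if $K$ is valid then $K'$ is valid. $\mathrm{pur}(K)=(C,\langle Q_i\setminus C:Q_i\setminus C\ne\emptyset\rangle)$. For pure $K$: $\mathbb I_K$ = indices lying in at least two members of the collection if $k\ge2$, else $\emptyset$; $P_1,\dots,P_t$ the nonempty sets among $Q_i\setminus\mathbb I_K$; $\mathrm{can}(K)=(\cdot,\langle\ \rangle)$ if $k\le1$, $(C,\langle\mathbb I_K,\mathbb I_K\rangle)$ if $k\ge2,\mathbb I_K\ne\emptyset,t\le1$, $(C,\langle P_1..P_t\rangle)$ if $k\ge2,\mathbb I_K=\emptyset$,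 $(C,\langle\mathbb I_K,\mathbb I_K,P_1..P_t\rangle)$ if $k\ge2,\mathbb I_K\ne\emptyset,t\ge2$. General-form notation $(C,\langle\mathbb I_K,\mathbb I_K,P_i,1\le i\le t\rangle)$: copies of $\mathbb I_K$ omitted when empty, and $t=0$ for the case $(C,\langle\mathbb I_K,\mathbb I_K\rangle)$. *)

(* Defs.v *)
From HB Require Import structures.
From mathcomp Require Import all_boot all_order all_algebra.
From mathcomp Require Import all_classical all_reals all_analysis.
Set Implicit Arguments. Unset Strict Implicit. Unset Printing Implicit Defensive.
Import Order.TTheory GRing.Theory Num.Theory.
Local Open Scope ring_scope.

(* A joint outcome of X_1..X_n (indexed by 'I_n), each X_i taking values in a
   countable alphabet, encoded in nat. *)
Definition outcome (n : nat) := {ffun 'I_n -> nat}.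

Definition is_distribution (R : realType) (n : nat) (p : outcome n -> R) : Prop :=
  (forall x, 0 <= p x) /\ (\esum_(x in (@classical_sets.setT (outcome n))) (p x)%:E = 1)%E.

(* value of X_A = (X_i, i in A), canonically represented (0 outside A) *)
Definition proj (n : nat) (A : {set 'I_n}) (x : outcome n) : outcome n :=
  [ffun i => if i \in A then x i else 0%N].

Definition marginal (R : realType) (n : nat) (p : outcome n -> R)
  (A : {set 'I_n}) (v : outcome n) : R :=
  fine (\esum_(y in (fun y => proj A y = v)) (p y)%:E)%E.

(* Shannon entropy H(X_A) (natural log; ln 0 = 0 so 0 log 0 = 0), in \bar R *)
Definition entropyE (R : realType) (n : nat) (p : outcome n -> R)
  (A : {set 'I_n}) : \bar R :=
  \esum_(v in (@classical_sets.setT (outcome n))) (- (marginal p A v * ln (marginal p A v)))%:E.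

Definition finite_entropies (R : realType) (n : nat) (p : outcome n -> R) : Prop :=
  forall i : 'I_n, (entropyE p (finset.set1 i) < +oo)%E.

Definition admissible (R : realType) (n : nat) (p : outcome n -> R) : Prop :=
  is_distribution p /\ finite_entropies p.

(* real-valued entropy (finite for admissible p) *)
Definition entH (R : realType) (n : nat) (p : outcome n -> R) (A : {set 'I_n}) : R :=
  fine (entropyE p A).

Definition condH (R : realType) (n : nat) (p : outcome n -> R) (Q C : {set 'I_n}) : R :=
  entH p (Q :|: C) - entH p C.

(* A CMI (C, <Q_1..Q_k>): the multiset is a seq (all notions below are
   invariant under permutation). *)
Definition CMI (n : nat) := ({set 'I_n} * seq {set 'I_n})%type.

Definition valid (R : realType) (n : nat) (p : outcome n -> R) (K : CMI n) : Prop :=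
  \sum_(Q <- K.2) condH p Q K.1 - condH p ((\big[@finset.setU _/(@finset.set0 ('I_n))]_(Q <- K.2) Q)) K.1 = 0.

Definition degenerate (R : realType) (n : nat) (K : CMI n) : Prop :=
  forall p : outcome n -> R, admissible p -> valid p K.

Definition cmi_implies (R : realType) (n : nat) (K K' : CMI n) : Prop :=
  forall p : outcome n -> R, admissible p -> valid p K -> valid p K'.

Definition pur (n : nat) (K : CMI n) : CMI n :=
  (K.1, [seq Q :\: K.1 | Q <- [seq Q <- K.2 | Q :\: K.1 != (@finset.set0 ('I_n))]]).

Definition IK (n : nat) (K : CMI n) : {set 'I_n} :=
  if (1 < size K.2)%N then finset.finset (fun i : 'I_n => (1 < count (fun Q : {set 'I_n} => i \in Q) K.2)%N)
  else (@finset.set0 ('I_n)).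

Definition Ps (n : nat) (K : CMI n) : seq {set 'I_n} :=
  [seq Q :\: IK K | Q <- [seq Q <- K.2 | Q :\: IK K != (@finset.set0 ('I_n))]].

(* can(K); None stands for the degenerate CMI (. , < >) *)
Definition can (n : nat) (K : CMI n) : option (CMI n) :=
  if (size K.2 <= 1)%N then None
  else if IK K == (@finset.set0 ('I_n)) then Some (K.1, Ps K)
  else if (size (Ps K) <= 1)%N then Some (K.1, [:: IK K; IK K])
  else Some (K.1, IK K :: IK K :: Ps K).

(* Main.v *)
Require Import Defs.
From HB Require Import structures.
From mathcomp Require Import all_boot all_order all_algebra.
From mathcomp Require Import all_classical all_reals all_analysis.
From mathcomp Require Import lra.
Import Order.TTheory GRing.Theory Num.Theory.
Local Open Scope ring_scope.

Section Aux.
Local Open Scope classical_set_scope.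
Lemma esum_two (R : realType) (T : choiceType) (D : set T) (a : T -> \bar R) x y :
  x <> y -> (forall i, (0 <= a i)%E) -> (forall i, D i -> i <> x -> i <> y -> a i = 0%E) ->
  D x -> D y -> \esum_(i in D) a i = (a x + a y)%E.
Proof.
move=> xy a0 az Dx Dy.
rewrite (esumID [set x]) //.
have -> : D `&` [set x] = [set x].
  by apply/seteqP; split=> [z [] //|z /= ->].
rewrite esum_set1 //; congr (_ + _)%E.
rewrite (esumID [set y]) //.
have -> : (D `&` ~` [set x]) `&` [set y] = [set y].
  apply/seteqP; split=> [z [] //|z /= ->]; split=> //; split=> //=.
  by move=> yx; apply: xy.
rewrite esum_set1 // esum1 ?adde0 // => z [[Dz zx] zy]; exact: az.
Qed.

End Aux.

Section C.
Local Open Scope ring_scope.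
Variables (R : realType) (n : nat) (S : {set 'I_n}) (i0 : 'I_n).
Hypothesis i0S : i0 \in S.

Definition fb (b : nat) : outcome n := [ffun k => if k \in S then b else 0%N].
Definition pp (x : outcome n) : R := if (x == fb 0) || (x == fb 1) then 1/2 else 0.

Lemma fb01 : fb 0 <> fb 1.
Proof. by move=> /(congr1 (fun f : outcome n => f i0)); rewrite !ffunE i0S. Qed.

Lemma projfb (A : {set 'I_n}) : (Defs.proj A (fb 0) == Defs.proj A (fb 1)) = (A :&: S == finset.set0).
Proof.
apply/eqP/eqP.
  move=> e; apply/finset.setP=> k; rewrite !inE; apply/negbTE/andP=> [[kA kS]].
  by move: (congr1 (fun f : outcome n => f k) e); rewrite !ffunE kA kS.
move=> e; apply/ffunP=> k; rewrite !ffunE.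
case kA: (k \in A) => //; case kS: (k \in S) => //.
have : k \in A :&: S by rewrite !inE kA kS.
by rewrite e inE.
Qed.
Local Open Scope classical_set_scope.

Lemma pp_ge0 x : 0 <= pp x.
Proof. by rewrite /pp; case: ifP. Qed.

Lemma pp_fb0 : pp (fb 0) = 1/2.
Proof. by rewrite /pp eqxx. Qed.
Lemma pp_fb1 : pp (fb 1) = 1/2.
Proof. by rewrite /pp eqxx orbT. Qed.

Lemma esum_pp (D : set (outcome n)) :
  (\esum_(x in D) (pp x)%:E = (if fb 0 \in D then (1/2)%:E else 0) + (if fb 1 \in D then (1/2)%:E else 0))%E.
Proof.
rewrite esum_mkcond (@esum_two _ _ _ _ (fb 0) (fb 1)) //.
- by rewrite pp_fb0 pp_fb1.
- exact: fb01.
- by move=> x; case: ifP => // _; rewrite lee_fin pp_ge0.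
- move=> x _ h0 h1; case: ifP => // _; rewrite /pp.
  by move/eqP/negbTE: h0 => ->; move/eqP/negbTE: h1 => ->.
Qed.

Lemma marginal_pp (A : {set 'I_n}) v :
  marginal pp A v = (if Defs.proj A (fb 0) == v then 1/2 else 0) + (if Defs.proj A (fb 1) == v then 1/2 else 0).
Proof.
rewrite /marginal esum_pp.
have h b : fb b \in ((fun y => Defs.proj A y = v) : set (outcome n)) = (Defs.proj A (fb b) == v).
  by apply/idP/eqP => [/set_mem|/mem_set].
rewrite !h.
by case: eqP => _; case: eqP => _ /=; rewrite ?adde0 ?add0e ?addr0 ?add0r // -EFinD.
Qed.

Lemma ln_half : - (1/2 * ln (1/2 : R)) = ln 2 / 2.
Proof.
rewrite div1r lnV ?posrE // mulrN opprK mulrC.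
by rewrite mulrC.
Qed.

Lemma ln2_gt0 : 0 < ln (2 : R).
Proof. by apply: ln_gt0; rewrite ltr1n. Qed.

Lemma entropyE_pp (A : {set 'I_n}) :
  entropyE pp A = (if A :&: S == finset.set0 then 0 else ln 2)%:E.
Proof.
rewrite /entropyE -projfb.
case: eqP => e.
  apply: esum1 => v _; rewrite marginal_pp -e.
  case: eqP => _; last by rewrite addr0 mul0r oppr0.
  by rewrite -splitr ln1 mulr0 oppr0.
rewrite (@esum_two _ _ _ _ (Defs.proj A (fb 0)) (Defs.proj A (fb 1))) //.
- rewrite !marginal_pp eqxx (eq_sym (Defs.proj A (fb 1))).
  move/eqP/negbTE: (e) => ->; rewrite eqxx addr0 add0r ln_half -EFinD.
  by rewrite -splitr.
- move=> v; rewrite marginal_pp lee_fin.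
  case: eqP => e0; case: eqP => e1.
  + by exfalso; apply: e; rewrite e0 e1.
  + by rewrite addr0 ln_half divr_ge0 // ltW // ln2_gt0.
  + by rewrite add0r ln_half divr_ge0 // ltW // ln2_gt0.
  + by rewrite addr0 mul0r oppr0.
- move=> v _ h0 h1; rewrite marginal_pp.
  case: eqP => [/esym//|_]; case: eqP => [/esym//|_].
  by rewrite addr0 mul0r oppr0.
Qed.

Lemma entH_pp (A : {set 'I_n}) :
  entH pp A = if A :&: S == finset.set0 then 0 else ln 2.
Proof. by rewrite /entH entropyE_pp. Qed.

Lemma admissible_pp : admissible pp.
Proof.
split; last by move=> i; rewrite entropyE_pp ltry.
split; first exact: pp_ge0.
by rewrite esum_pp !mem_set // -EFinD -splitr.

Qed.
End C.

Local Open Scope ring_scope.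
Lemma can_fst (n : nat) (K : CMI n) C Qs : can K = Some (C, Qs) -> C = K.1 /\ (1 < size K.2)%N.
Proof.
rewrite /can; case: leqP => // h.
by repeat case: ifP => _; case=> <- _.
Qed.

Lemma sum_if (R : realType) (T : Type) (s : seq T) (P : pred T) (c : R) :
  \sum_(Q <- s) (if P Q then c else 0) = (count P s)%:R * c.
Proof.
elim: s => [|Q s IH]; first by rewrite big_nil mul0r.
by rewrite big_cons IH /= natrD mulrDl; case: (P Q); rewrite ?mul1r ?mul0r ?add0r.
Qed.

Lemma bigU_D (n : nat) (s : seq {set 'I_n}) (C : {set 'I_n}) :
  has (fun Q => Q :\: C != finset.set0) s ->
  (\big[@finset.setU _/(@finset.set0 ('I_n))]_(Q <- s) Q) :\: C != finset.set0.
Proof.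
elim: s => [|Q s IH] //=; rewrite big_cons finset.setDUl finset.setU_eq0 negb_and.
by case/orP=> [->//|/IH ->]; rewrite orbT.
Qed.

Theorem mainTheorem6 (R : realType) (n : nat) (K K' : CMI n)
  (C C' : {set 'I_n}) (Qs Qs' : seq {set 'I_n}) :
  ~ degenerate R K -> ~ degenerate R K' ->
  can (pur K) = Some (C, Qs) -> can (pur K') = Some (C', Qs') ->
  cmi_implies R K K' -> C \subset C'.
Proof.
move=> _ _ /can_fst [eC _] /can_fst [eC' sz] imp.
rewrite /= in eC eC'.
apply/fintype.subsetP => i iC; apply/negPn/negP => iC'.
have i0S : i \in ~: C' by rewrite inE.
have hit (A : {set 'I_n}) : i \in A -> entH (pp R n (~: C')) A = ln 2.
  move=> iA; rewrite (@entH_pp R n _ _ i0S); case: eqP => // e.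
  have : i \in A :&: ~: C' by rewrite !inE iA.
  by rewrite e inE.
have := imp _ (@admissible_pp R n _ _ i0S).
have vK : valid (pp R n (~: C')) K.
  rewrite /valid -eC /condH big1 => [|Q _]; last first.
    by rewrite !hit ?subrr // inE iC ?orbT.
  by rewrite !hit ?subrr // inE iC ?orbT.
move=> /(_ vK).
rewrite /valid -eC' /condH.
have eU (A : {set 'I_n}) : entH (pp R n (~: C')) (A :|: C') = if A :\: C' == finset.set0 then 0 else ln 2.
  by rewrite (@entH_pp R n _ _ i0S) finset.setIUl finset.setICr finset.setU0 finset.setDE.
have e0 : entH (pp R n (~: C')) C' = 0.
  by rewrite (@entH_pp R n _ _ i0S) finset.setICr eqxx.
rewrite e0 (eq_bigr (fun Q => if Q :\: C' != finset.set0 then ln 2 else 0)); last first.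
  by move=> Q _; rewrite eU subr0; case: eqP.
rewrite sum_if eU.
have szc : (1 < count (fun Q => Q :\: C' != finset.set0) K'.2)%N.
  by move: sz; rewrite /pur /= size_map size_filter -eC'.
have hs : has (fun Q => Q :\: C' != finset.set0) K'.2 by rewrite has_count; apply: ltnW.
rewrite (negbTE (@bigU_D n K'.2 C' hs)) subr0.
have l0 := @ln2_gt0 R.
have : 2%:R <= (count (fun Q => Q :\: C' != finset.set0) K'.2)%:R :> R by rewrite ler_nat.
move: (count _ _) => m hm.
have : 2%:R * ln (2:R) <= m%:R * ln 2 by rewrite ler_wpM2r // ltW.
move=> h1 h2; move: l0 h1 h2; move: (ln (2:R)) (m%:R : R) => a b; clear; move=> *; lra.
Qed.
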